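(* For every $k\ge1$, $$A_{2k}=\{F_{2k}\}\cup\left\{(n+2)F_{2k}+\left\lfloor\frac{n+1}{\phi}\right\rfloor F_{2k-1}\ :\ n\ge 0\right\},$$ where $\phi=(1+\sqrt5)/2$.
   Context: Fibonacci numbers: $F_1=F_2=1$, $F_{n+1}=F_n+F_{n-1}$ for $n\ge2$. Chung–Graham decomposition: every positive integer $n$ has a unique representation $n=\sum_{i\ge1}c_iF_{2i}$ with $c_i\in\{0,1,2\}$, only finitely many nonzero, such that whenever $c_i=c_j=2$ with $i<j$ there is $k$ with $i<k<j$ and $c_k=0$. Let $\mathcal{CG}(n)$ be the set of $F_{2i}$ with $c_i\neq0$ in this decomposition. For $k\ge1$, $A_{2k}=\{n\ge1:\min\mathcal{CG}(n)=F_{2k}\}$. *)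

(* Defs.v *)
From Stdlib Require Import Reals Lia Arith.
Open Scope R_scope.

Fixpoint F (n : nat) : nat :=
  match n with
  | O => O
  | S O => 1%nat
  | S ((S m) as p) => (F p + F m)%nat
  end.

Fixpoint cg_sum (c : nat -> nat) (N : nat) : nat :=
  match N with
  | O => O
  | S M => (cg_sum c M + c (S M) * F (2 * S M))%nat
  end.

(* c (indexed from i = 1; the value c 0 is irrelevant) is a Chung–Graham
   decomposition of n: n = sum_{i>=1} c_i F_{2i}, c_i in {0,1,2},
   finitely many nonzero, and between any two 2's there is a 0. *)
Definition CG_decomp (n : nat) (c : nat -> nat) : Prop :=
  (forall i, (1 <= i)%nat -> (c i <= 2)%nat) /\
  (exists N, (forall i, (N < i)%nat -> c i = O) /\ n = cg_sum c N) /\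
  (forall i j, (1 <= i)%nat -> (i < j)%nat -> c i = 2%nat -> c j = 2%nat ->
     exists k, (i < k < j)%nat /\ c k = O).

(* A_{2k} = { n >= 1 : min CG(n) = F_{2k} }, i.e. in the (unique)
   Chung–Graham decomposition of n the smallest index i >= 1 with c_i <> 0
   is i = k (the F_{2i}, i >= 1, are pairwise distinct). *)
Definition A2k (k n : nat) : Prop :=
  (1 <= n)%nat /\
  exists c, CG_decomp n c /\ c k <> O /\
    (forall i, (1 <= i < k)%nat -> c i = O).

Definition phi : R := (1 + sqrt 5) / 2.

(* floor of a nonnegative real, as a nat (Int_part x = floor x) *)
Definition floor_nat (x : R) : nat := Z.to_nat (Int_part x).

(* Main.v *)
Require Import Defs.
From Stdlib Require Import Reals Arith Lia Lra Psatz ZArith.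
Open Scope nat_scope.

Definition dshift (d : nat -> nat) : nat -> nat := fun j => d (S j).

Fixpoint PA (d : nat -> nat) (L : nat) {struct L} : nat :=
  match L with O => O | S L' => (d 0 + 2 * PA (dshift d) L' + PB (dshift d) L')%nat end
with PB (d : nat -> nat) (L : nat) {struct L} : nat :=
  match L with O => O | S L' => (PA (dshift d) L' + PB (dshift d) L')%nat end.

Fixpoint Sk (k : nat) (d : nat -> nat) (L : nat) : nat :=
  match L with O => O | S L' => (d 0 * F (2 * k) + Sk (S k) (dshift d) L')%nat end.

Lemma Fss : forall n, F (S (S n)) = (F (S n) + F n)%nat.
Proof. reflexivity. Qed.

Lemma Sk_PA : forall L k d, (1 <= k)%nat ->
  Sk k d L = (PA d L * F (2 * k) + PB d L * F (2 * k - 1))%nat.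
Proof.
  induction L as [|L IH]; intros k d Hk; [reflexivity|].
  cbn [Sk PA PB]. rewrite (IH (S k) (dshift d)) by lia.
  destruct k as [|k0]; [lia|].
  replace (2 * S (S k0) - 1)%nat with (S (S (S (2*k0))))%nat by lia.
  replace (2 * S (S k0))%nat with (S (S (S (S (2*k0)))))%nat by lia.
  replace (2 * S k0 - 1)%nat with (S (2*k0))%nat by lia.
  replace (2 * S k0)%nat with (S (S (2*k0)))%nat by lia.
  generalize (2 * k0)%nat; intro t. rewrite !Fss. ring.
Qed.

Lemma Sk_snoc : forall L k d, Sk k d (S L) = (Sk k d L + d L * F (2 * (k + L)))%nat.
Proof.
  induction L as [|L IH]; intros k d.
  - cbn [Sk]. replace (k + 0)%nat with k by lia. lia.
  - change (Sk k d (S (S L))) with (d 0 * F (2 * k) + Sk (S k) (dshift d) (S L))%nat.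
    rewrite IH. cbn [Sk]. unfold dshift at 2.
    replace (S k + L)%nat with (k + S L)%nat by lia. lia.
Qed.

Lemma Sk_ext : forall L k d d', (forall j, d j = d' j) -> Sk k d L = Sk k d' L.
Proof.
  induction L as [|L IH]; intros k d d' H; [reflexivity|].
  cbn [Sk]. rewrite H. f_equal. apply IH. intro j; unfold dshift; apply H.
Qed.

Lemma cg_Sk : forall L k c, (1 <= k)%nat ->
  cg_sum c (k - 1 + L) = (cg_sum c (k - 1) + Sk k (fun j => c (k + j)%nat) L)%nat.
Proof.
  induction L as [|L IH]; intros k c Hk.
  - rewrite Nat.add_0_r. cbn [Sk]. lia.
  - replace (k - 1 + S L)%nat with (S (k - 1 + L))%nat by lia.
    cbn [cg_sum]. rewrite IH by lia. rewrite Sk_snoc.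
    replace (S (k - 1 + L))%nat with (k + L)%nat by lia. lia.
Qed.

Lemma cg_zero : forall n c, (forall i, (1 <= i <= n)%nat -> c i = O) -> cg_sum c n = O.
Proof.
  induction n as [|n IH]; intros c H; [reflexivity|].
  cbn [cg_sum]. rewrite IH by (intros; apply H; lia). rewrite H by lia. lia.
Qed.

Lemma F_pos : forall n, (1 <= F (S n))%nat.
Proof.
  assert (forall n, (1 <= F (S n))%nat /\ (1 <= F (S (S n)))%nat).
  { induction n as [|n [IH1 IH2]]; [simpl; lia|]. split; [exact IH2|].
    change (F (S (S (S n)))) with (F (S (S n)) + F (S n))%nat. lia. }
  intro n; apply H.
Qed.

Definition nst (st : bool) (a : nat) : bool :=
  match a with O => false | 1 => st | _ => true end.

Fixpoint validF (st : bool) (d : nat -> nat) (L : nat) : Prop :=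
  match L with
  | O => True
  | S L' => (d 0 <= 2)%nat /\ (st = true -> d 0 <> 2%nat) /\ validF (nst st (d 0)) (dshift d) L'
  end.

Lemma valid_of_cond : forall L st d,
  (forall i, (i < L)%nat -> (d i <= 2)%nat) ->
  (forall i j, (i < j < L)%nat -> d i = 2%nat -> d j = 2%nat -> exists l, (i < l < j)%nat /\ d l = O) ->
  (st = true -> forall j, (j < L)%nat -> d j = 2%nat -> exists l, (l < j)%nat /\ d l = O) ->
  validF st d L.
Proof.
  induction L as [|L IH]; intros st d H H0 H1; [exact I|].
  cbn [validF]. split; [apply H; lia|]. split.
  { intros Hst Hd0. destruct (H1 Hst 0%nat ltac:(lia) Hd0) as [l [Hl _]]; lia. }
  apply IH.
  - intros i Hi; unfold dshift; apply H; lia.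
  - intros i j Hij Hi Hj. unfold dshift in *.
    destruct (H0 (S i) (S j) ltac:(lia) Hi Hj) as [l [Hl Hl0]].
    exists (pred l). replace (S (pred l)) with l by lia. split; [lia|exact Hl0].
  - intros Hst j Hj Hdj. unfold dshift in *.
    assert (E : d 0 = O \/ d 0 = 1%nat \/ d 0 = 2%nat) by (specialize (H 0%nat); lia).
    destruct E as [E|[E|E]]; rewrite E in Hst; simpl in Hst.
    + discriminate.
    + destruct (H1 Hst (S j) ltac:(lia) Hdj) as [l [Hl Hl0]].
      assert (l <> O) by (intro; subst; lia).
      exists (pred l). replace (S (pred l)) with l by lia. split; [lia|exact Hl0].
    + destruct (H0 0%nat (S j) ltac:(lia) E Hdj) as [l [Hl Hl0]].
      exists (pred l). replace (S (pred l)) with l by lia. split; [lia|exact Hl0].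
Qed.

Lemma cond_of_valid : forall L st d, validF st d L ->
  (forall i, (i < L)%nat -> (d i <= 2)%nat) /\
  (forall i j, (i < j < L)%nat -> d i = 2%nat -> d j = 2%nat -> exists l, (i < l < j)%nat /\ d l = O) /\
  (st = true -> forall j, (j < L)%nat -> d j = 2%nat -> exists l, (l < j)%nat /\ d l = O).
Proof.
  induction L as [|L IH]; intros st d H.
  { split; [intros; lia|]. split; [intros; lia|]. intros; lia. }
  destruct H as [H0 [H1 H2]]. apply IH in H2 as [Ha [Hb Hc]]. unfold dshift in *.
  split; [|split].
  - intros i Hi; destruct i; [exact H0|apply Ha; lia].
  - intros i j Hij Hi Hj. destruct j as [|j]; [lia|]. destruct i as [|i].
    + rewrite Hi in Hc. simpl in Hc. destruct (Hc eq_refl j ltac:(lia) Hj) as [l [Hl Hl0]].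
      exists (S l). split; [lia|exact Hl0].
    + destruct (Hb i j ltac:(lia) Hi Hj) as [l [Hl Hl0]]. exists (S l). split; [lia|exact Hl0].
  - intros Hst j Hj Hdj. destruct j as [|j]; [exfalso; exact (H1 Hst Hdj)|].
    assert (E : d 0 = O \/ d 0 = 1%nat \/ d 0 = 2%nat) by lia.
    destruct E as [E|[E|E]].
    + exists O. split; [lia|exact E].
    + rewrite E in Hc. simpl in Hc. destruct (Hc Hst j ltac:(lia) Hdj) as [l [Hl Hl0]].
      exists (S l). split; [lia|exact Hl0].
    + exfalso; exact (H1 Hst E).
Qed.
Open Scope R_scope.

Lemma phi_sq : phi * phi = phi + 1.
Proof.
  unfold phi. pose proof (sqrt_sqrt 5 ltac:(lra)). nra.
Qed.

Lemma phi_bounds : 3/2 < phi < 2.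
Proof.
  unfold phi. pose proof (sqrt_sqrt 5 ltac:(lra)). pose proof (sqrt_pos 5).
  split; nra.
Qed.

Definition vv (a b : nat) : R := INR a - phi * INR b.
Definition bnd (st : bool) : R := if st then phi else phi + 1.

Lemma x_phi : (2 - phi) * phi = phi - 1.
Proof. pose proof phi_sq; nra. Qed.
Lemma x_phi1 : (2 - phi) * (phi + 1) = 1.
Proof. pose proof phi_sq; nra. Qed.

Lemma vv_T : forall d0 a b,
  vv (d0 + 2 * a + b)%nat (a + b)%nat = INR d0 + (2 - phi) * vv a b.
Proof.
  intros. unfold vv. rewrite !plus_INR, !mult_INR.
  replace (INR 2) with 2 by (simpl; ring).
  replace ((2 - phi) * (INR a - phi * INR b)) with
    (2 * INR a - phi * INR a - 2 * phi * INR b + (phi * phi) * INR b) by ring.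
  rewrite phi_sq. ring.
Qed.

Lemma vv_step : forall d L,
  vv (PA d (S L)) (PB d (S L)) = INR (d 0%nat) + (2 - phi) * vv (PA (dshift d) L) (PB (dshift d) L).
Proof. intros. cbn [PA PB]. apply vv_T. Qed.

Lemma vv_nonneg : forall L d, 0 <= vv (PA d L) (PB d L).
Proof.
  induction L as [|L IH]; intros d.
  - unfold vv; simpl; lra.
  - rewrite vv_step. pose proof phi_bounds. pose proof (pos_INR (d 0%nat)).
    pose proof (IH (dshift d)). nra.
Qed.

Lemma vv_bound : forall L st d, validF st d L -> vv (PA d L) (PB d L) < bnd st.
Proof.
  pose proof phi_bounds as Hp.
  induction L as [|L IH]; intros st d H.
  - unfold vv, bnd; simpl. destruct st; lra.
  - rewrite vv_step. destruct H as [H0 [H1 H2]].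
    pose proof (IH _ _ H2) as Hb. pose proof (vv_nonneg L (dshift d)) as Hn.
    set (v := vv (PA (dshift d) L) (PB (dshift d) L)) in *.
    assert (Hx : (2 - phi) * v < (2 - phi) * bnd (nst st (d 0%nat))) by (apply Rmult_lt_compat_l; lra).
    pose proof x_phi; pose proof x_phi1.
    assert (E : d 0%nat = 0%nat \/ d 0%nat = 1%nat \/ d 0%nat = 2%nat) by lia.
    destruct E as [E|[E|E]]; rewrite E in *; unfold bnd in *; simpl nst in *; simpl INR.
    + destruct st; lra.
    + destruct st; lra.
    + destruct st; [exfalso; apply H1; reflexivity|]. lra.
Qed.

Lemma choose_d : forall v st, 0 <= v -> v < bnd st ->
  exists d0, (d0 <= 2)%nat /\ (st = true -> d0 <> 2%nat) /\ INR d0 <= v /\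
    v - INR d0 < (2 - phi) * bnd (nst st d0).
Proof.
  intros v st Hv0 Hv1. pose proof phi_bounds. pose proof x_phi; pose proof x_phi1.
  unfold bnd in *.
  destruct (Rlt_dec v 1).
  { exists 0%nat. simpl. repeat split; try lia; lra. }
  destruct (Rlt_dec v 2).
  { exists 1%nat. simpl. repeat split; try lia; try lra. destruct st; lra. }
  destruct st; [lra|].
  exists 2%nat. simpl. repeat split; try lia; lra.
Qed.

Lemma exist_seq : forall n a b st, (a + b <= n)%nat -> 0 <= vv a b -> vv a b < bnd st ->
  exists d L, validF st d L /\ (forall j, (L <= j)%nat -> d j = 0%nat) /\
    PA d L = a /\ PB d L = b.
Proof.
  pose proof phi_bounds as Hp. pose proof x_phi as Hx1; pose proof x_phi1 as Hx2.
  induction n as [|n IH]; intros a b st Hab H0 H1.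
  - assert (a = 0%nat) by lia. assert (b = 0%nat) by lia. subst.
    exists (fun _ => 0%nat), 0%nat. repeat split; auto.
  - destruct (Nat.eq_dec a 0) as [Ea|Ea].
    { subst a. assert (b = 0%nat).
      { unfold vv in H0. simpl in H0. destruct b; [reflexivity|].
        pose proof (pos_INR b). rewrite S_INR in H0. nra. }
      subst. exists (fun _ => 0%nat), 0%nat. repeat split; auto. }
    destruct (choose_d (vv a b) st H0 H1) as [d0 [Hd0 [Hd1 [Hd2 Hd3]]]].
    assert (Hbl : (2 - phi) * bnd (nst st d0) <= 1) by (unfold bnd; destruct (nst st d0); lra).
    unfold vv in Hd2, Hd3.
    assert (Hle1 : (d0 + b <= a)%nat).
    { apply INR_le. rewrite plus_INR. pose proof (pos_INR b). nra. }
    assert (Hle2 : (a < d0 + 2 * b + 1)%nat).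
    { apply INR_lt. rewrite !plus_INR, mult_INR. replace (INR 2) with 2 by (simpl; ring).
      replace (INR 1) with 1 by reflexivity. pose proof (pos_INR b). nra. }
    set (a' := (a - d0 - b)%nat). set (b' := (2 * b + d0 - a)%nat).
    assert (Ea' : a = (d0 + 2 * a' + b')%nat) by (unfold a', b'; lia).
    assert (Eb' : b = (a' + b')%nat) by (unfold a', b'; lia).
    assert (Hv : vv a b = INR d0 + (2 - phi) * vv a' b') by (rewrite Ea', Eb'; apply vv_T).
    unfold vv in Hv.
    assert (Hv0 : 0 <= vv a' b').
    { unfold vv. nra. }
    assert (Hv1 : vv a' b' < bnd (nst st d0)).
    { unfold vv. apply (Rmult_lt_reg_l (2 - phi)); [lra|]. lra. }
    destruct (IH a' b' (nst st d0) ltac:(lia) Hv0 Hv1) as [d' [L' [Hva [Hz [HA HB]]]]].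
    exists (fun j => match j with O => d0 | S j' => d' j' end), (S L').
    split; [|split; [|split]].
    + cbn [validF]. split; [exact Hd0|]. split; [exact Hd1|]. exact Hva.
    + intros j Hj. destruct j; [lia|]. apply Hz; lia.
    + cbn [PA]. change (dshift (fun j => match j with O => d0 | S j' => d' j' end)) with d'.
      cbn [PB]. rewrite HA, HB. lia.
    + cbn [PB]. change (dshift (fun j => match j with O => d0 | S j' => d' j' end)) with d'.
      rewrite HA, HB. lia.
Qed.

Lemma floor_unique : forall y (B : nat), INR B <= y < INR B + 1 -> floor_nat y = B.
Proof.
  intros y B [H1 H2]. unfold floor_nat. destruct (base_Int_part y) as [Ha Hb].
  rewrite INR_IZR_INZ in H1, H2.
  assert (Hlt : (Int_part y < Z.of_nat B + 1)%Z).
  { apply lt_IZR. rewrite plus_IZR. simpl (IZR 1). lra. }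
  assert (Hgt : (Z.of_nat B - 1 < Int_part y)%Z).
  { apply lt_IZR. rewrite minus_IZR. simpl (IZR 1). lra. }
  replace (Int_part y) with (Z.of_nat B) by lia. apply Nat2Z.id.
Qed.

Lemma floor_spec : forall y, 0 <= y -> INR (floor_nat y) <= y < INR (floor_nat y) + 1.
Proof.
  intros y Hy. unfold floor_nat. destruct (base_Int_part y) as [Ha Hb].
  assert (H0 : (0 <= Int_part y)%Z).
  { assert (-1 < Int_part y)%Z; [|lia]. apply lt_IZR. simpl. lra. }
  rewrite INR_IZR_INZ, Z2Nat.id by exact H0. lra.
Qed.

Lemma build : forall k d L m, (1 <= k)%nat -> validF false d L ->
  (forall j, (L <= j)%nat -> d j = 0%nat) -> d 0%nat <> 0%nat ->
  m = (PA d L * F (2 * k) + PB d L * F (2 * k - 1))%nat -> A2k k m.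
Proof.
  intros k d L m Hk Hv Hz Hd0 Hm.
  destruct (cond_of_valid L false d Hv) as [Hb [Hp _]].
  destruct L as [|L'].
  { exfalso. apply Hd0. apply Hz. lia. }
  set (c := fun i => if (k <=? i)%nat then d (i - k)%nat else 0%nat).
  assert (Hck : forall j, c (k + j)%nat = d j).
  { intro j. unfold c. replace (k <=? k + j)%nat with true by (symmetry; apply Nat.leb_le; lia).
    f_equal; lia. }
  split.
  { assert (1 <= PA d (S L'))%nat by (cbn [PA]; lia).
    destruct k as [|k0]; [lia|]. replace (2 * S k0)%nat with (S (2 * k0 + 1))%nat in Hm by lia.
    pose proof (F_pos (2 * k0 + 1)). nia. }
  exists c. split; [split; [|split]|split].
  - intros i Hi. unfold c. destruct (k <=? i)%nat eqn:E; [|lia].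
    destruct (Nat.lt_ge_cases (i - k) (S L')); [apply Hb; auto|rewrite Hz; lia].
  - exists (k - 1 + S L')%nat. split.
    + intros i Hi. unfold c. destruct (k <=? i)%nat eqn:E; [|reflexivity]. apply Hz. lia.
    + rewrite cg_Sk by exact Hk. rewrite cg_zero.
      2:{ intros i Hi. unfold c. destruct (k <=? i)%nat eqn:E; [apply Nat.leb_le in E; lia|reflexivity]. }
      rewrite (Sk_ext _ _ _ d) by exact Hck. rewrite Sk_PA by exact Hk. lia.
  - intros i j Hi Hij Hci Hcj. unfold c in Hci, Hcj.
    destruct (k <=? i)%nat eqn:Ei; [|discriminate]. destruct (k <=? j)%nat eqn:Ej; [|discriminate].
    apply Nat.leb_le in Ei, Ej.
    assert (Hjl : (j - k < S L')%nat).
    { destruct (Nat.lt_ge_cases (j - k) (S L')); auto. rewrite Hz in Hcj by lia. discriminate. }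
    destruct (Hp (i - k)%nat (j - k)%nat ltac:(lia) Hci Hcj) as [l [Hl Hl0]].
    exists (k + l)%nat. split; [lia|]. rewrite Hck. exact Hl0.
  - rewrite <- (Nat.add_0_r k) at 1. rewrite Hck. exact Hd0.
  - intros i Hi. unfold c. replace (k <=? i)%nat with false by (symmetry; apply Nat.leb_gt; lia).
    reflexivity.
Qed.

Theorem proposition4p3 :
  forall k : nat, (1 <= k)%nat ->
  forall m : nat,
    A2k k m <->
    (m = F (2 * k) \/
     exists n : nat,
       m = ((n + 2) * F (2 * k)
            + floor_nat (INR (n + 1) / phi) * F (2 * k - 1))%nat).
Proof.
  intros k Hk m. pose proof phi_bounds as Hp. pose proof x_phi as Hx1. pose proof x_phi1 as Hx2.
  split.
  - intros [Hm1 [c [[Hc2 [[N [HN Hsum]] Hc22]] [Hck Hbelow]]]].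
    assert (HkN : (k <= N)%nat).
    { destruct (Nat.le_gt_cases k N); auto. exfalso. apply Hck. apply HN. lia. }
    set (L' := (N - k)%nat).
    set (d := fun j => c (k + j)%nat).
    assert (HN' : N = (k - 1 + S L')%nat) by (unfold L'; lia).
    rewrite HN' in Hsum. rewrite cg_Sk in Hsum by exact Hk.
    rewrite cg_zero in Hsum by (intros i Hi; apply Hbelow; lia).
    rewrite Sk_PA in Hsum by exact Hk. fold d in Hsum.
    assert (Hv : validF false d (S L')).
    { apply valid_of_cond.
      - intros i Hi. unfold d. apply Hc2. lia.
      - intros i j Hij Hi Hj. unfold d in Hi, Hj.
        destruct (Hc22 (k + i)%nat (k + j)%nat ltac:(lia) ltac:(lia) Hi Hj) as [l [Hl Hl0]].
        exists (l - k)%nat. split; [lia|]. unfold d. replace (k + (l - k))%nat with l by lia. exact Hl0.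
      - intros H; discriminate. }
    pose proof (vv_bound _ _ _ Hv) as Hub. unfold bnd in Hub.
    pose proof (vv_step d L') as Hst. pose proof (vv_nonneg L' (dshift d)) as Hn.
    assert (Hd0 : 1 <= INR (d 0%nat)).
    { unfold d. rewrite Nat.add_0_r. replace 1 with (INR 1) by reflexivity. apply le_INR. lia. }
    assert (Hlb : 1 <= vv (PA d (S L')) (PB d (S L'))) by nra.
    clear Hst Hn Hd0.
    set (A := PA d (S L')) in *. set (B := PB d (S L')) in *.
    unfold vv in Hlb, Hub.
    destruct (Nat.eq_dec A 1) as [EA|EA]; [destruct (Nat.eq_dec B 0) as [EB|EB]|].
    + left. rewrite Hsum, EA, EB. lia.
    + exfalso. rewrite EA in Hlb. simpl INR in Hlb.
      assert (0 < INR B) by (apply lt_0_INR; lia). nra.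
    + right. assert (HA2 : (2 <= A)%nat).
      { destruct (Nat.le_gt_cases 2 A) as [|HA]; auto. exfalso.
        assert (HA1 : INR A <= 1) by (replace 1 with (INR 1) by reflexivity; apply le_INR; lia).
        pose proof (pos_INR B).
        assert (HB0 : INR B = 0) by nra.
        assert (B = 0%nat) by (apply INR_eq; simpl; exact HB0).
        assert (INR A >= 1) by nra.
        assert (1 <= A)%nat by (apply INR_le; simpl; lra). lia. }
      exists (A - 2)%nat. replace (A - 2 + 2)%nat with A by lia.
      rewrite (floor_unique _ B). { lia. }
      replace (INR (A - 2 + 1)) with (INR A - 1)
        by (replace (A - 2 + 1)%nat with (A - 1)%nat by lia; rewrite minus_INR by lia; reflexivity).
      set (z := (INR A - 1) / phi).
      assert (Ez : INR A - 1 = phi * z) by (unfold z; field; lra). split.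
      * apply (Rmult_le_reg_l phi); lra.
      * apply (Rmult_lt_reg_l phi); lra.
  - intros [Hm | [n Hm]].
    + apply (build k (fun j => match j with O => 1%nat | _ => 0%nat end) 1%nat m Hk).
      * cbn. repeat split; lia.
      * intros j Hj. destruct j; [lia|reflexivity].
      * discriminate.
      * cbn [PA PB]. rewrite Hm. simpl. rewrite !Nat.add_0_r. reflexivity.
    + set (B := floor_nat (INR (n + 1) / phi)) in *.
      assert (Hy : 0 <= INR (n + 1) / phi).
      { unfold Rdiv. apply Rmult_le_pos; [apply pos_INR|]. left; apply Rinv_0_lt_compat; lra. }
      pose proof (floor_spec _ Hy) as HB. fold B in HB.
      set (z := INR (n + 1) / phi) in *.
      assert (Ez : INR (n + 1) = phi * z) by (unfold z; field; lra).
      assert (Hv1 : 1 <= vv (n + 2) B).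
      { unfold vv. replace (INR (n + 2)) with (INR (n + 1) + 1)
          by (rewrite !plus_INR; simpl; ring). rewrite Ez. nra. }
      assert (Hv2 : vv (n + 2) B < bnd false).
      { unfold vv, bnd. replace (INR (n + 2)) with (INR (n + 1) + 1)
          by (rewrite !plus_INR; simpl; ring). rewrite Ez. nra. }
      destruct (exist_seq (n + 2 + B) (n + 2) B false ltac:(lia) ltac:(lra) Hv2)
        as [d [L [Hv [Hz [HA HB']]]]].
      apply (build k d L m Hk Hv Hz).
      * intro Hd0. destruct L as [|L'].
        { simpl in HA. lia. }
        pose proof (vv_step d L') as Hst. rewrite HA, HB', Hd0 in Hst. simpl INR in Hst.
        destruct Hv as [_ [_ Hv']]. rewrite Hd0 in Hv'. simpl nst in Hv'.
        pose proof (vv_bound _ _ _ Hv') as Hb. unfold bnd in Hb.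
        assert ((2 - phi) * vv (PA (dshift d) L') (PB (dshift d) L') < (2 - phi) * (phi + 1))
          by (apply Rmult_lt_compat_l; lra).
        lra.
      * rewrite HA, HB'. exact Hm.
Qed.
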